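(* An even nonnegative integer $n$ satisfies $v(n)=2$ if and only if $n\in\{18,22,24,28\}$.
   Context: A hyperbinary expansion of a nonnegative integer $n$ is a word $x_0\cdots x_k$ over $\{0,1,2\}$ with $x_0\ne0$ and $\sum_i x_i2^{k-i}=n$. The empty word is the unique hyperbinary expansion of $0$. Write $\mathcal H(n)$ for the set of such expansions and $b(n)=|\mathcal H(n)|$. $A(n)$ is the directed graph on $\mathcal H(n)$ with an arc from $\mathbf x02\mathbf y$ to $\mathbf x10\mathbf y$, from $2\mathbf y$ to $10\mathbf y$, and from $\mathbf x12\mathbf y$ to $\mathbf x20\mathbf y$, for arbitrary words $\mathbf x,\mathbf y$ whenever both endpoints lie in $\mathcal H(n)$. $A(n)$ is connected. $v(n)$ denotes the cyclomatic number of $A(n)$: (number of arcs) $-\,b(n)+1$. *)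

(* Defs.v *)
From mathcomp Require Import all_boot all_order all_algebra.
Set Implicit Arguments. Unset Strict Implicit. Unset Printing Implicit Defensive.

(* Words over {0,1,2} are represented as seq nat (most significant digit first). *)

Definition hvalue (w : seq nat) : nat := foldl (fun acc d => acc * 2 + d) 0 w.

(* w is a hyperbinary expansion of n: digits in {0,1,2}, x_0 <> 0 (vacuous for
   the empty word), and value n. *)
Definition is_hyp (n : nat) (w : seq nat) : bool :=
  [&& all (fun d => d < 3) w, head 1 w != 0 & hvalue w == n].

Fixpoint words (k : nat) : seq (seq nat) :=
  if k is k'.+1 then
    flatten [seq [seq d :: w | w <- words k'] | d <- [:: 0; 1; 2]]
  else [:: [::]].

Definition words_upto (m : nat) : seq (seq nat) :=
  flatten [seq words k | k <- iota 0 m.+1].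

(* H(n): a hyperbinary expansion of n with leading digit >= 1 and length L
   satisfies n >= 2^(L-1) >= L, so every expansion has length <= n and
   H(n) is the (duplicate-free) list of words of length <= n that are
   hyperbinary expansions of n. *)
Definition Hset (n : nat) : seq (seq nat) := filter (is_hyp n) (words_upto n).

Definition b (n : nat) : nat := size (Hset n).

(* Arc relation of A(n): u -> w iff
   u = x 0 2 y, w = x 1 0 y   or   u = 2 y, w = 1 0 y   or
   u = x 1 2 y, w = x 2 0 y   for some words x, y (x = take i u, y = drop (i+2) u). *)
Definition arc (u w : seq nat) : bool :=
  has (fun i => (u == take i u ++ [:: 0; 2] ++ drop i.+2 u)
                && (w == take i u ++ [:: 1; 0] ++ drop i.+2 u)) (iota 0 (size u))
  || [&& u != [::], head 0 u == 2 & w == [:: 1; 0] ++ behead u]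
  || has (fun i => (u == take i u ++ [:: 1; 2] ++ drop i.+2 u)
                && (w == take i u ++ [:: 2; 0] ++ drop i.+2 u)) (iota 0 (size u)).

Definition arcs (n : nat) : seq (seq nat * seq nat) :=
  [seq p <- [seq (u, w) | u <- Hset n, w <- Hset n] | arc p.1 p.2].

Definition v (n : nat) : int := (size (arcs n))%:Z - (b n)%:Z + 1.

(* Main.v *)
Require Import Defs.
From mathcomp Require Import all_boot all_order all_algebra zify.
Set Implicit Arguments. Unset Strict Implicit. Unset Printing Implicit Defensive.

Fixpoint stepP (x : nat) (u w : seq nat) : bool :=
  if u is a :: u' then
    [&& a == x, head 0 u' == 2 & w == x.+1 :: 0 :: behead u']
    || (if w is c :: w' then (a == c) && stepP x u' w' else false)
  else false.

Definition lead (u w : seq nat) : bool :=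
  [&& u != [::], head 0 u == 2 & w == [:: 1; 0] ++ behead u].

Lemma hasP_step x u w :
  has (fun i => (u == take i u ++ [:: x; 2] ++ drop i.+2 u)
             && (w == take i u ++ [:: x.+1; 0] ++ drop i.+2 u)) (iota 0 (size u))
  = stepP x u w.
Proof.
elim: u w => [|a u IH] w //=.
have E : iota 1 (size u) = [seq i.+1 | i <- iota 0 (size u)] by exact: (iotaDl 1 0 (size u)).
rewrite E has_map.
congr orb.
  rewrite eqseq_cons.
  clear E IH; case: u => [|c u] /=; first by rewrite !andbF.
  rewrite drop0 eqseq_cons eqxx andbT andbA.
  by [].
case: w => [|c w] /=.
  rewrite -[RHS](has_pred0 (iota 0 (size u))); apply: eq_has => i /=.
  by rewrite andbF.
rewrite -IH; case: (eqVneq a c) => [<-|ne] /=.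
  by apply: eq_has => i /=; rewrite !eqseq_cons !eqxx.
rewrite -[RHS](has_pred0 (iota 0 (size u))); apply: eq_has => i /=.
by rewrite !eqseq_cons [c == a]eq_sym (negbTE ne) !andbF.
Qed.

Lemma arcE (u w : seq nat) : Defs.arc u w = stepP 0 u w || lead u w || stepP 1 u w.
Proof. by rewrite /Defs.arc -!hasP_step. Qed.

Lemma stepP_nil x u : stepP x u [::] = false.
Proof. by case: u => [|a u] //=; rewrite !andbF. Qed.

Lemma rcons_neq_last (s t : seq nat) a b : a != b -> (rcons s a == rcons t b) = false.
Proof. by move=> ne; rewrite eqseq_rcons (negbTE ne) andbF. Qed.

Lemma stepP_rcons x u w d : stepP x (rcons u d) (rcons w d) = stepP x u w.
Proof.
elim: u w => [|a u IH] w /=.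
  by case: w => [|c w] /=; rewrite ?andbF.
congr orb.
  case: u {IH} => [|b u] /=.
    case: w => [|c [|e w]] //=; rewrite !eqseq_cons /= ?andbF //.
    - by case: d => [|[|[|d]]] /=; rewrite ?andbF.
    - have -> : (rcons w d == [::]) = false by case: w.
      by rewrite !andbF.
  by rewrite -!rcons_cons eqseq_rcons eqxx andbT.
by case: w => [|c w] /=; rewrite ?IH // stepP_nil andbF.
Qed.

Lemma stepP_02 x u w : stepP x (rcons u 0) (rcons w 2) = false.
Proof.
elim: u w => [|a u IH] w /=.
  by case: w => [|c w] /=; rewrite ?stepP_nil ?andbF.
apply/norP; split.
  case: u {IH} => [|b u] /=; first by rewrite !andbF.
  by rewrite -!rcons_cons rcons_neq_last ?andbF.
by case: w => [|c w] /=; rewrite ?IH ?stepP_nil ?andbF.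
Qed.

Lemma stepP_2 x w : stepP x [:: 2] w = false.
Proof. by case: w => [|c w] /=; rewrite ?andbF. Qed.

Lemma stepP_20 x u a w :
  stepP x (rcons (rcons u a) 2) (rcons w 0) = (a == x) && (w == rcons u a.+1).
Proof.
elim: u w => [|b u IH] w /=.
  have E : forall s : seq nat, match s with [::] => false | c :: w' => (a == c) && ((2 == x) && false || match w' with [::] => false | c0 :: _ => (2 == c0) && false end) end = false.
    by case=> [|? [|? ?]]; rewrite /= ?andbF.
  rewrite E orbF -[[:: x.+1; 0]]/(rcons [:: x.+1] 0) eqseq_rcons eqxx andbT.
  by case: eqP => // ->.
have -> : [&& b == x, head 0 (rcons (rcons u a) 2) == 2
          & rcons w 0 == [:: x.+1, 0 & behead (rcons (rcons u a) 2)]] = false.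
  case: u {IH} => [|e u] /=.
    by rewrite (rcons_neq_last w [:: x.+1; 0] (isT : 0 != 2)) !andbF.
  by rewrite -!rcons_cons rcons_neq_last ?andbF.
rewrite /=.
case: w => [|c w] /=; first by rewrite stepP_nil !andbF.
by rewrite IH eqseq_cons [c == b]eq_sym; case: (b == c); case: (a == x).
Qed.

Lemma lead_rcons u w d : lead (rcons u d) (rcons w d) = lead u w.
Proof.
rewrite /lead; case: u => [|a u] /=.
  rewrite (_ : [:: 1; 0] = rcons [:: 1] 0) // eqseq_rcons.
  by case: d => [|[|[|d]]] /=; rewrite ?andbF.
by rewrite -!rcons_cons eqseq_rcons eqxx andbT.
Qed.

Lemma lead_02 u w : lead (rcons u 0) (rcons w 2) = false.
Proof.
rewrite /lead; case: u => [|a u] //=.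
by rewrite -!rcons_cons rcons_neq_last ?andbF.
Qed.

Lemma lead_20 u w : lead (rcons u 2) (rcons w 0) = (u == [::]) && (w == [:: 1]).
Proof.
rewrite /lead; case: u => [|a u] /=.
  by rewrite (_ : [:: 1; 0] = rcons [:: 1] 0) // eqseq_rcons andbT.
by rewrite -!rcons_cons rcons_neq_last ?andbF.
Qed.

Lemma arc_rcons u w d : Defs.arc (rcons u d) (rcons w d) = Defs.arc u w.
Proof. by rewrite !arcE !stepP_rcons lead_rcons. Qed.

Lemma arc_02 u w : Defs.arc (rcons u 0) (rcons w 2) = false.
Proof. by rewrite arcE !stepP_02 lead_02. Qed.

Definition cond (u : seq nat) := (u == [::]) || (last 0 u < 2).
Definition inc (u : seq nat) :=
  if u is a :: u' then rcons (belast a u') (last a u').+1 else [:: 1].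

Lemma inc_rcons u a : inc (rcons u a) = rcons u a.+1.
Proof. by case: u => [|b u] //=; rewrite belast_rcons last_rcons. Qed.

Lemma cond_rcons u a : cond (rcons u a) = (a < 2).
Proof. by rewrite /cond last_rcons; case: u. Qed.

Lemma arc_20 u w : Defs.arc (rcons u 2) (rcons w 0) = cond u && (w == inc u).
Proof.
case/lastP: u => [|u a].
  by rewrite arcE lead_20 /=; case: (rcons w 0) => [|? ?]; rewrite /= ?andbF ?orbF.
rewrite arcE !stepP_20 lead_20 cond_rcons inc_rcons.
have -> : (rcons u a == [::]) = false by case: u.
by case: a => [|[|a]] /=; rewrite ?orbF.
Qed.

Lemma hvalue_rcons w d : hvalue (rcons w d) = hvalue w * 2 + d.
Proof. by rewrite /hvalue -cats1 foldl_cat. Qed.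

Lemma head_rcons' (d0 : nat) x d : head d0 (rcons x d) = head d x.
Proof. by case: x. Qed.

Lemma mem_map_cons d (W : seq (seq nat)) c w :
  (c :: w \in [seq d :: x | x <- W]) = (c == d) && (w \in W).
Proof.
apply/mapP/andP => [[w' Hw' [-> ->]]|[/eqP -> Hw]]; first by [].
by exists w.
Qed.

Lemma nil_notin_map d (W : seq (seq nat)) : ([::] \in [seq d :: x | x <- W]) = false.
Proof. by apply/mapP => -[]. Qed.

Lemma mem_words k w : (w \in words k) = (size w == k) && all (fun d => d < 3) w.
Proof.
elim: k w => [|k IH] [|c w] //=.
  by rewrite !mem_cat !nil_notin_map.
rewrite !mem_cat !mem_map_cons IH in_nil orbF eqSS.
by case: c => [|[|[|c]]] /=; rewrite ?andbF ?orbF.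
Qed.

Lemma uniq_flat_cons (D : seq nat) (W : seq (seq nat)) :
  uniq D -> uniq W -> uniq (flatten [seq map (cons d) W | d <- D]).
Proof.
move=> uD uW; elim: D uD => [|d D IH] //= /andP [dD uD].
have inj : injective (fun y : seq nat => d :: y) by move=> x y [].
rewrite cat_uniq (map_inj_uniq inj) uW IH // andbT /=; apply/hasPn => w /flattenP [s /mapP [d' d'D ->]].
case/mapP => w' _ ->; apply/mapP => -[w'' _ [E _]].
by move: dD; rewrite -E d'D.
Qed.

Lemma uniq_words k : uniq (words k).
Proof. by elim: k => [|k IH] //=; have := uniq_flat_cons (D := [:: 0; 1; 2]) isT IH. Qed.

Lemma words_upto_S m : words_upto m.+1 = words_upto m ++ words m.+1.
Proof. by rewrite /words_upto -addn1 iotaD map_cat flatten_cat /= cats0. Qed.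

Lemma mem_words_upto m w : (w \in words_upto m) = (size w <= m) && all (fun d => d < 3) w.
Proof.
elim: m => [|m IH]; first by case: w.
rewrite words_upto_S mem_cat IH mem_words -andb_orl orbC -ltnS -leq_eqVlt.
by [].
Qed.

Lemma uniq_words_upto m : uniq (words_upto m).
Proof.
elim: m => [|m IH]; first by [].
rewrite words_upto_S cat_uniq IH uniq_words andbT andTb.
apply/hasPn => w; rewrite mem_words => /andP [/eqP Hs _].
by rewrite mem_words_upto Hs ltnn.
Qed.

Lemma size_le_hvalue w : head 1 w != 0 -> size w <= hvalue w.
Proof.
elim/last_ind: w => [|x d IH] //.
rewrite head_rcons' size_rcons hvalue_rcons.
case: x IH => [|a x] /=; first by rewrite /hvalue /=; case: d.
move=> IH ha; have := IH ha; lia.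
Qed.

Lemma mem_Hset n w : (w \in Hset n) = is_hyp n w.
Proof.
rewrite /Hset mem_filter mem_words_upto.
case H: (is_hyp n w) => //=.
move: H => /and3P [Ha Hh /eqP Hv].
by rewrite Ha andbT -Hv size_le_hvalue.
Qed.

Lemma uniq_Hset n : uniq (Hset n).
Proof. exact/filter_uniq/uniq_words_upto. Qed.

Lemma hyp_rcons n x d :
  is_hyp n (rcons x d) = [&& d < 3, all (fun d => d < 3) x, head d x != 0 & hvalue x * 2 + d == n].
Proof.
rewrite /is_hyp all_rcons head_rcons' hvalue_rcons.
by case: (d < 3); case: (all _ x).
Qed.

Lemma hyp_nil n : is_hyp n [::] = (n == 0).
Proof. by rewrite /is_hyp /= eq_sym. Qed.

Lemma headE (a c : nat) x : x != [::] -> head a x = head c x.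
Proof. by case: x. Qed.

Lemma Hset_odd k : perm_eq (Hset k.*2.+1) [seq rcons x 1 | x <- Hset k].
Proof.
apply: uniq_perm; first exact: uniq_Hset.
  by rewrite (map_inj_uniq (@rcons_injl nat 1)) uniq_Hset.
move=> w; rewrite mem_Hset; apply/idP/mapP.
- case/lastP: w => [|x d]; first by rewrite hyp_nil.
  rewrite hyp_rcons => /and4P [Hd Ha Hh /eqP Hv].
  have d1 : d = 1 by lia.
  subst d; exists x => //; rewrite mem_Hset /is_hyp Ha Hh /=; apply/eqP; lia.
- move=> [x]; rewrite mem_Hset => /and3P [Ha Hh /eqP Hv] ->.
  rewrite hyp_rcons Ha Hh /=; apply/eqP; lia.
Qed.

Lemma Hset_even k :
  perm_eq (Hset k.+1.*2) ([seq rcons x 0 | x <- Hset k.+1] ++ [seq rcons x 2 | x <- Hset k]).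
Proof.
apply: uniq_perm; first exact: uniq_Hset.
  rewrite cat_uniq (map_inj_uniq (@rcons_injl nat 0)) (map_inj_uniq (@rcons_injl nat 2)) !uniq_Hset andbT andTb.
  apply/hasPn => w /mapP [x _ ->]; apply/mapP => -[y _ /rcons_inj [_]] //.
move=> w; rewrite mem_Hset mem_cat; apply/idP/orP.
- case/lastP: w => [|x d]; first by rewrite hyp_nil.
  rewrite hyp_rcons => /and4P [Hd Ha Hh /eqP Hv].
  case: d Hd Hh Hv => [|[|[|d]]] // _ Hh Hv; first last; try lia.
    right; apply/mapP; exists x => //; rewrite mem_Hset /is_hyp Ha /=.
    apply/andP; split; last by apply/eqP; lia.
    by case: x {Ha Hv} Hh.
  left; apply/mapP; exists x => //; rewrite mem_Hset /is_hyp Ha /=.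
  have xn : x != [::] by case: x Hv {Ha Hh}.
  by rewrite (headE 1 0 xn) Hh /=; apply/eqP; lia.
- case=> /mapP [x]; rewrite mem_Hset => /and3P [Ha Hh /eqP Hv] ->; rewrite hyp_rcons Ha /=.
    have xn : x != [::] by case: x Hv {Ha Hh}.
    by rewrite -(headE 1 0 xn) Hh /=; apply/eqP; lia.
  apply/andP; split; last by apply/eqP; lia.
  by case: x {Ha Hv} Hh.
Qed.

Lemma Hset0 : Hset 0 = [:: [::]].
Proof. by []. Qed.

Definition C (s1 s2 : seq (seq nat)) := \sum_(u <- s1) count (Defs.arc u) s2.

Lemma size_arcs_gen s1 s2 :
  size [seq p <- [seq (u, w) | u <- s1, w <- s2] | Defs.arc p.1 p.2] = C s1 s2.
Proof.
rewrite /C; elim: s1 => [|u s1 IH]; first by rewrite big_nil.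
by rewrite allpairs_cons filter_cat size_cat IH big_cons size_filter count_map.
Qed.

Lemma size_arcs n : size (arcs n) = C (Hset n) (Hset n).
Proof. exact: size_arcs_gen. Qed.

Lemma C_perm s1 s2 t1 t2 : perm_eq s1 t1 -> perm_eq s2 t2 -> C s1 s2 = C t1 t2.
Proof.
move=> P1 P2; rewrite /C (perm_big _ P1); apply: eq_bigr => u _.
exact: (permP P2).
Qed.

Lemma C_odd k : C (Hset k.*2.+1) (Hset k.*2.+1) = C (Hset k) (Hset k).
Proof.
rewrite (C_perm (Hset_odd k) (Hset_odd k)) /C big_map; apply: eq_bigr => u _.
by rewrite count_map; apply: eq_count => w /=; exact: arc_rcons.
Qed.

Lemma sum_count (T : eqType) (a : pred T) (s : seq T) :
  \sum_(x <- s) (a x : nat) = count a s.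
Proof. by elim: s => [|x s IH]; rewrite ?big_nil ?big_cons ?IH. Qed.

Lemma inc_hyp k u : is_hyp k u -> cond u -> is_hyp k.+1 (inc u).
Proof.
case/lastP: u => [|x a].
  by rewrite hyp_nil => /eqP ->.
rewrite cond_rcons inc_rcons !hyp_rcons => /and4P [Ha Hx Hh /eqP Hv] a2.
rewrite Hx /= ltnS a2 /=; apply/andP; split; last by apply/eqP; lia.
by case: x {Hx Hv} Hh.
Qed.

Lemma C_even k :
  C (Hset k.+1.*2) (Hset k.+1.*2)
  = C (Hset k.+1) (Hset k.+1) + C (Hset k) (Hset k) + count cond (Hset k).
Proof.
rewrite (C_perm (Hset_even k) (Hset_even k)) /C big_cat /= !big_map.
have E1 : \sum_(u <- Hset k.+1) count (Defs.arc (rcons u 0))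
      ([seq rcons x 0 | x <- Hset k.+1] ++ [seq rcons x 2 | x <- Hset k])
      = \sum_(u <- Hset k.+1) count (Defs.arc u) (Hset k.+1).
  apply: eq_bigr => u _; rewrite count_cat !count_map.
  rewrite [X in _ + X](eq_count (a2 := pred0)) ?count_pred0 ?addn0; last by move=> w /=; rewrite arc_02.
  by apply: eq_count => w /=; rewrite arc_rcons.
have E2 : \sum_(u <- Hset k) count (Defs.arc (rcons u 2))
      ([seq rcons x 0 | x <- Hset k.+1] ++ [seq rcons x 2 | x <- Hset k])
      = \sum_(u <- Hset k) (cond u : nat) + \sum_(u <- Hset k) count (Defs.arc u) (Hset k).
  rewrite -big_split /= big_seq_cond [RHS]big_seq_cond; apply: eq_bigr => u /andP [uH _].
  rewrite count_cat !count_map; congr addn; last first.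
    by apply: eq_count => w /=; rewrite arc_rcons.
  rewrite (eq_count (a2 := fun w => cond u && (w == inc u))); last by move=> w /=; rewrite arc_20.
  case cu: (cond u) => /=; last by rewrite (eq_count (a2 := pred0)) ?count_pred0.
  have := count_uniq_mem (inc u) (uniq_Hset k.+1).
  rewrite mem_Hset inc_hyp -?mem_Hset // => <-.
by rewrite E1 E2 sum_count [count _ _ + _]addnC addnA.
Qed.

Lemma b_odd k : b k.*2.+1 = b k.
Proof. by rewrite /b (perm_size (Hset_odd k)) size_map. Qed.

Lemma b_even k : b k.+1.*2 = b k.+1 + b k.
Proof. by rewrite /b (perm_size (Hset_even k)) size_cat !size_map. Qed.

Lemma b0 : b 0 = 1. Proof. by []. Qed.

Lemma cc_odd k : count cond (Hset k.*2.+1) = b k.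
Proof.
rewrite (permP (Hset_odd k)) count_map /b -count_predT.
by apply: eq_count => x /=; rewrite cond_rcons.
Qed.

Lemma cc_even k : count cond (Hset k.+1.*2) = b k.+1.
Proof.
rewrite (permP (Hset_even k)) count_cat !count_map /b -count_predT.
rewrite [X in _ + X](eq_count (a2 := pred0)) ?count_pred0 ?addn0; last by move=> x /=; rewrite cond_rcons.
by apply: eq_count => x /=; rewrite cond_rcons.
Qed.

Lemma cc0 : count cond (Hset 0) = 1. Proof. by []. Qed.

Lemma cc_half j : count cond (Hset j) = b j./2.
Proof.
have [i [->|->]] : exists i, j = i.*2 \/ j = i.*2.+1.
  exists j./2; have := odd_double_half j; case: (odd j) => /= E; [right|left]; lia.
- by rewrite doubleK; case: i => [|i]; [exact: cc0 | exact: cc_even].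
- by rewrite -[(i.*2.+1)./2]/(uphalf i.*2) uphalf_double cc_odd.
Qed.

Lemma v_odd k : v k.*2.+1 = v k.
Proof. by rewrite /v size_arcs C_odd b_odd -size_arcs. Qed.

Lemma v_even k : v k.+1.*2 = (v k.+1 + v k + Posz (count cond (Hset k)) - 1)%R.
Proof.
rewrite /v size_arcs C_even b_even -!size_arcs.
rewrite !PoszD; lia.
Qed.

Lemma v0 : v 0 = 0. Proof. by []. Qed.

Lemma b_even' m : 0 < m -> b m.*2 = b m + b m.-1.
Proof. by case: m => // m _; rewrite b_even. Qed.

Lemma v_even' m : 0 < m -> v m.*2 = (v m + v m.-1 + Posz (b (m.-1./2)) - 1)%R.
Proof. by case: m => // m _; rewrite v_even cc_half. Qed.

Lemma double_test p : 0 < p -> (p.*2 - 1 = (p - 1).*2.+1)%N.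
Proof. lia. Qed.

Lemma nat_cases n : n = 0 \/ (exists k, n = k.*2.+1) \/ (exists m, 0 < m /\ n = m.*2).
Proof.
have := odd_double_half n; case: (odd n) => /= E.
  by right; left; exists n./2; lia.
case: (posnP n./2) => H; first by left; lia.
by right; right; exists n./2; split; lia.
Qed.

Lemma b_pos n : 0 < b n.
Proof.
elim/ltn_ind: n => n IH.
case: (nat_cases n) => [E|[[k E]|[m [m0 E]]]]; subst n => //.
  by rewrite b_odd; apply: IH; lia.
by rewrite b_even' // addn_gt0 IH //; lia.
Qed.

Lemma v_ge0 n : (0 <= v n)%R.
Proof.
elim/ltn_ind: n => n IH.
case: (nat_cases n) => [E|[[k E]|[m [m0 E]]]]; subst n => //.
  by rewrite v_odd; apply: IH; lia.
rewrite v_even' //.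
have h1 := IH m ltac:(lia); have h2 := IH m.-1 ltac:(lia); have h3 := b_pos (m.-1./2).
lia.
Qed.

Fixpoint bvF (f n : nat) : nat * int :=
  if f is f'.+1 then
    if n is 0 then (1, 0%R) else
    if odd n then bvF f' n./2 else
    let m := n./2 in
    ((bvF f' m).1 + (bvF f' m.-1).1,
     ((bvF f' m).2 + (bvF f' m.-1).2 + Posz (bvF f' (m.-1./2)).1 - 1)%R)
  else (1, 0%R).

Lemma bvF_ok f n : n <= f -> bvF f n = (b n, v n).
Proof.
elim: f n => [|f IH] n.
  by rewrite leqn0 => /eqP ->.
move=> nf; case: (nat_cases n) => [E|[[k E]|[m [m0 E]]]]; subst n => //=.
  by rewrite odd_double /= uphalf_double v_odd b_odd IH //; lia.
case: m m0 nf => // m _ nf.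
rewrite -[m.+1.*2]/(m.*2.+2) /= odd_double doubleK /= -[m.*2.+2]/(m.+1).*2.
rewrite !IH /=; try lia.
by rewrite b_even' // v_even'.
Qed.

Lemma vval n : v n = (bvF n n).2.
Proof. by rewrite bvF_ok. Qed.
Lemma bval n : b n = (bvF n n).1.
Proof. by rewrite bvF_ok. Qed.

Lemma halfDS x : (x.*2.+1)./2 = x.
Proof. by rewrite /= uphalf_double. Qed.

Lemma pow2S c : 2 ^ c.+1 = (2 ^ c).*2.
Proof. by rewrite expnS mul2n. Qed.

Lemma pow2_b d : 4 <= b (2 ^ (d + 3)).
Proof.
elim: d => [|d IH]; first by rewrite bval; vm_compute.
have p0 := expn_gt0 2 (d + 3).
rewrite addSn pow2S b_even' //; have := b_pos (2 ^ (d + 3)).-1; lia.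
Qed.

Lemma pow2m2_b d : 4 <= b (2 ^ (d + 4) - 2).
Proof.
elim: d => [|d IH]; first by rewrite bval; vm_compute.
have p0 : 2 <= 2 ^ (d + 4) by rewrite -[2]/(2 ^ 1) leq_exp2l // addn4.
rewrite addSn pow2S (_ : (2 ^ (d + 4)).*2 - 2 = (2 ^ (d + 4) - 1).*2); last by lia.
rewrite b_even'; last by lia.
rewrite (_ : (2 ^ (d + 4) - 1).-1 = 2 ^ (d + 4) - 2); last by lia.
have := b_pos (2 ^ (d + 4) - 1); lia.
Qed.

Lemma b_pm1 c : b (2 ^ c - 1) = 1.
Proof.
elim: c => [|c IH] //.
have p0 := expn_gt0 2 c.
by rewrite pow2S (_ : (2 ^ c).*2 - 1 = (2 ^ c - 1).*2.+1) ?b_odd //; lia.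
Qed.

Lemma v_pm1 c : v (2 ^ c - 1) = 0%R.
Proof.
elim: c => [|c IH] //.
have p0 := expn_gt0 2 c.
by rewrite pow2S (_ : (2 ^ c).*2 - 1 = (2 ^ c - 1).*2.+1) ?v_odd //; lia.
Qed.

Lemma v_pow c : v (2 ^ c) = 0%R.
Proof.
elim: c => [|c IH]; first by rewrite vval; vm_compute.
have p0 := expn_gt0 2 c.
rewrite pow2S v_even' // IH (_ : (2 ^ c).-1 = 2 ^ c - 1); last by lia.
rewrite v_pm1.
have -> : (2 ^ c - 1)./2 = 2 ^ c.-1 - 1.
  case: c {IH} p0 => [|c] p0 //.
  by rewrite pow2S (_ : (2 ^ c).*2 - 1 = (2 ^ c - 1).*2.+1) ?halfDS //; have := expn_gt0 2 c; lia.
by rewrite b_pm1.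
Qed.

Lemma v_pm2 c : v (2 ^ c - 2) = 0%R.
Proof.
case: c => [|d] //.
elim: d => [|d IH] //.
have p0 := expn_gt0 2 d.
rewrite pow2S (_ : (2 ^ d.+1).*2 - 2 = (2 ^ d.+1 - 1).*2); last by rewrite pow2S; lia.
rewrite v_even'; last by rewrite pow2S; lia.
rewrite v_pm1 (_ : (2 ^ d.+1 - 1).-1 = 2 ^ d.+1 - 2); last by lia.
rewrite IH (_ : (2 ^ d.+1 - 2)./2 = 2 ^ d - 1); last first.
  by rewrite pow2S (_ : (2 ^ d).*2 - 2 = (2 ^ d - 1).*2) ?doubleK //; lia.
by rewrite b_pm1.
Qed.

Definition L6 := [:: 10; 12; 18; 22; 24; 28].

Definition inS n := (exists a, n = 2 ^ a) \/ (exists a, n = 2 ^ a - 2) \/ n \in L6.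

Lemma check_list :
  all (fun m => ((bvF m.*2 m.*2).2 <= 2)%R ==> (m.*2 \in L6))
    [:: 11; 13; 19; 23; 25; 29; 10; 12; 18; 22; 24; 28].
Proof. by vm_compute. Qed.

Lemma concrete m : m \in [:: 11; 13; 19; 23; 25; 29; 10; 12; 18; 22; 24; 28] ->
  (v m.*2 <= 2)%R -> inS m.*2.
Proof.
move=> Hm; rewrite vval => hv; right; right.
by have := allP check_list m Hm; rewrite hv.
Qed.

Lemma mainP n : ~~ odd n -> (v n <= 2)%R -> inS n.
Proof.
elim/ltn_ind: n => n IH on hv0.
case: (nat_cases n) => [E|[[k E]|[m [m0 E]]]]; subst n.
- by right; left; exists 0.
- by rewrite /= odd_double in on.
have hv := hv0; rewrite v_even' // in hv.
have hv1 := v_ge0 m; have hv2 := v_ge0 m.-1.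
case: (boolP (odd m)) => om.
- have om1 : ~~ odd m.-1 by move: om; case: (m) => //= j; case: (odd j).
  have le1 : (v m.-1 <= 2)%R by have := b_pos (m.-1./2); lia.
  case: (IH m.-1 ltac:(lia) om1 le1) => [[a Ea]|[[a Ea]|Ein]].
  + case: a Ea => [|[|[|[|a]]]] Ea; first by rewrite Ea in om1.
    * by right; left; exists 3; move: Ea; rewrite ?expnS ?expn0; lia.
    * by right; right; rewrite (_ : m = 5) //; move: Ea; rewrite ?expnS ?expn0; lia.
    * by right; right; rewrite (_ : m = 9) //; move: Ea; rewrite ?expnS ?expn0; lia.
    have hb := pow2_b a.
    rewrite (_ : a + 3 = a.+3) in hb; last by lia.
    have : 4 <= b (m.-1./2) by rewrite Ea pow2S doubleK.
    lia.
  + case: a Ea => [|[|a]] Ea.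
    - by right; left; exists 2; move: Ea; rewrite ?expnS ?expn0; lia.
    - by right; left; exists 2; move: Ea; rewrite ?expnS ?expn0; lia.
    by right; left; exists a.+3; have := expn_gt0 2 a; move: Ea; rewrite !expnS; lia.
  + apply: (concrete _ hv0).
    have Em : m = (m.-1).+1 by lia.
    rewrite Em; move: (m.-1) Ein => j Hj.
    have AL : all (fun j => j.+1 \in [:: 11; 13; 19; 23; 25; 29; 10; 12; 18; 22; 24; 28]) L6 by [].
    exact: (allP AL).
have le0 : (v m <= 2)%R by have := b_pos (m.-1./2); lia.
case: (IH m ltac:(lia) om le0) => [[a Ea]|[[a Ea]|Ein]].
- by left; exists a.+1; rewrite pow2S Ea.
- case: a Ea => [|[|[|[|[|a]]]]] Ea.
  + by move: Ea m0; rewrite ?expnS ?expn0; lia.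
  + by move: Ea m0; rewrite ?expnS ?expn0; lia.
  + by left; exists 2; move: Ea; rewrite ?expnS ?expn0; lia.
  + by right; right; rewrite (_ : m = 6) //; move: Ea; rewrite ?expnS ?expn0; lia.
  + by right; right; rewrite (_ : m = 14) //; move: Ea; rewrite ?expnS ?expn0; lia.
  have hb := pow2m2_b a.
  have : 4 <= b (m.-1./2).
    rewrite (_ : m.-1 = (2 ^ (a + 4) - 2).*2.+1) ?halfDS //.
    have := expn_gt0 2 a; move: Ea; rewrite !expnS (expnD 2 a 4); lia.
  lia.
- apply: (concrete _ hv0).
  have AL : all (fun j => j \in [:: 11; 13; 19; 23; 25; 29; 10; 12; 18; 22; 24; 28]) L6 by [].
  exact: (allP AL).
Qed.

Theorem mainTheorem4 (n : nat) :
  ~~ odd n -> (v n = Posz 2 <-> n \in [:: 18; 22; 24; 28]).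
Proof.
move=> on; split.
  move=> hv; have le : (v n <= 2)%R by rewrite hv.
  have := mainP on le.
  case=> [[a Ea]|[[a Ea]|Hin]].
  - by move: hv; rewrite Ea v_pow.
  - by move: hv; rewrite Ea v_pm2.
  have AL : all (fun j => ((bvF j j).2 == 2%R) ==> (j \in [:: 18; 22; 24; 28])) L6.
    by vm_compute.
  by have := allP AL n Hin; rewrite -vval hv eqxx.
move=> H.
have AL : all (fun j => (bvF j j).2 == 2%R) [:: 18; 22; 24; 28] by vm_compute.
by rewrite vval; apply/eqP; exact: (allP AL n H).
Qed.
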